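(* Let $R$ be a discrete valuation ring with field of fractions $K$, uniformizer $\pi$ and residue field $k$. Let $A$ be an $R$-algebra with an $R$-linear involution $a\mapsto a^*$, let $V$ be a finite-dimensional $K$-vector space which is an $A$-module (via an $R$-bilinear map $A\times V\to V$) admitting a lattice $L$ with $A\cdot L\subset L$, and let $B$ be a nondegenerate $K$-bilinear form on $V$ with $B(ax,y)=B(x,a^*y)$ for all $a\in A$, $x,y\in V$, where either $B$ is alternating, or $B$ is symmetric and $\mathrm{char}(k)\neq2$. Then there exists a lattice $M$ of $V$ with $A\cdot M\subset M$ which is almost self-dual with respect to $B$.
   Context: A lattice of $V$ is a free $R$-submodule $M$ with $K\otimes_RM\to V$ an isomorphism; its dual is $M'=\{x\in V:B(x,y)\in R\ \forall y\in M\}$; $M$ is almost self-dual if $\pi M'\subset M\subset M'$. *)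

(* Defs.v *)
From HB Require Import structures.
From mathcomp Require Import all_boot all_order all_algebra.
Set Implicit Arguments. Unset Strict Implicit. Unset Printing Implicit Defensive.
Import GRing.Theory.
Local Open Scope ring_scope.

Definition DVR_with_uniformizer (R : idomainType) (pi : R) : Prop :=
  [/\ pi != 0, pi \isn't a GRing.unit &
      forall r : R, r != 0 -> exists (u : R) (n : nat),
        u \is a GRing.unit /\ r = u * pi ^+ n].

Definition fraction_field_of (R : idomainType) (K : fieldType)
    (iota : {rmorphism R -> K}) : Prop :=
  injective iota /\
  forall x : K, exists a b : R, b != 0 /\ x = iota a / iota b.

(* char(k) <> 2 for the residue field k = R / pi R, i.e. 2 is not in pi R. *)
Definition residue_char_neq2 (R : idomainType) (pi : R) : Prop :=
  ~ exists r : R, 2%:R = pi * r.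

Definition inR (R : idomainType) (K : fieldType) (iota : {rmorphism R -> K})
    (x : K) : Prop := exists r : R, x = iota r.

(* A lattice of V: a free R-submodule M such that K (x)_R M -> V is an
   isomorphism, i.e. the R-span of a K-basis of V. *)
Definition is_lattice (R : idomainType) (K : fieldType)
    (iota : {rmorphism R -> K}) (V : vectType K) (M : V -> Prop) : Prop :=
  exists b : (\dim (fullv : {vspace V})).-tuple V,
    basis_of fullv b /\
    forall x : V, M x <->
      exists c : 'I_(\dim (fullv : {vspace V})) -> R,
        x = \sum_i iota (c i) *: b`_i.

Definition dual_lattice (R : idomainType) (K : fieldType)
    (iota : {rmorphism R -> K}) (V : vectType K) (B : V -> V -> K)
    (M : V -> Prop) : V -> Prop :=
  fun x => forall y, M y -> inR iota (B x y).

Definition almost_self_dual (R : idomainType) (K : fieldType)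
    (iota : {rmorphism R -> K}) (pi : R) (V : vectType K) (B : V -> V -> K)
    (M : V -> Prop) : Prop :=
  (forall x, dual_lattice iota B M x -> M (iota pi *: x)) /\
  (forall x, M x -> dual_lattice iota B M x).

Definition stable_under (A V : Type) (act : A -> V -> V) (M : V -> Prop) : Prop :=
  forall (a : A) (x : V), M x -> M (act a x).

(* Main.v *)
Require Import Defs.
From HB Require Import structures.
From mathcomp Require Import all_boot all_order all_algebra.
From mathcomp Require Import ring.
From Stdlib Require Import Classical.
Set Implicit Arguments. Unset Strict Implicit. Unset Printing Implicit Defensive.
Import GRing.Theory.
Local Open Scope ring_scope.

Lemma least_nat (P : nat -> Prop) : (exists n, P n) ->
  exists n, P n /\ forall m, P m -> (n <= m)%N.
Proof.
case=> n Pn.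
suff H : forall N, (forall k, (k <= N)%N -> P k -> exists n, P n /\ forall m, P m -> (n <= m)%N).
  exact: (H n n (leqnn n) Pn).
elim=> [|N IH] k.
  rewrite leqn0 => /eqP -> P0; exists 0%N; split=> //.
move=> hk Pk.
case: (classic (exists j, (j <= N)%N /\ P j)) => [[j [hj Pj]]|nj].
  exact: (IH j hj Pj).
exists k; split=> // m Pm; rewrite leqNgt; apply/negP => hmk.
apply: nj; exists m; split=> //; rewrite -ltnS; exact: leq_trans hmk hk.
Qed.

Section Basics.
Variables (R : idomainType) (pi : R) (K : fieldType) (iota : {rmorphism R -> K}).
Hypothesis hDVR : DVR_with_uniformizer pi.
Hypothesis hfrac : fraction_field_of iota.

Lemma inR_iota r : inR iota (iota r). Proof. by exists r. Qed.
Lemma inR0 : inR iota 0. Proof. by exists 0; rewrite rmorph0. Qed.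
Lemma inRD x y : inR iota x -> inR iota y -> inR iota (x + y).
Proof. by case=> r -> [s ->]; exists (r + s); rewrite rmorphD. Qed.
Lemma inRN x : inR iota x -> inR iota (- x).
Proof. by case=> r ->; exists (- r); rewrite rmorphN. Qed.
Lemma inRM x y : inR iota x -> inR iota y -> inR iota (x * y).
Proof. by case=> r -> [s ->]; exists (r * s); rewrite rmorphM. Qed.
Lemma inRp e : inR iota (iota pi ^+ e).
Proof. by exists (pi ^+ e); rewrite rmorphXn. Qed.
Lemma inR_sum (I : Type) (r : seq I) (F : I -> K) :
  (forall i, inR iota (F i)) -> inR iota (\sum_(i <- r) F i).
Proof. move=> h; apply: (big_ind (inR iota)) => //; [exact: inR0 | exact: inRD]. Qed.

Lemma p_neq0 : iota pi != 0.
Proof.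
case: hDVR => pi0 _ _; case: hfrac => inj _.
apply/eqP => h; move/eqP: pi0; apply; apply: inj; by rewrite h rmorph0.
Qed.

Lemma denom1 (x : K) : exists d, inR iota (iota pi ^+ d * x).
Proof.
case: hfrac => _ /(_ x) [a [s [s0 ->]]].
case: hDVR => _ _ /(_ s s0) [u [m [uu ->]]].
exists m; exists (a * u^-1).
rewrite !rmorphM !rmorphXn rmorphV //.
have pm0 : iota pi ^+ m != 0 by rewrite expf_neq0 // p_neq0.
have iu0 : iota u != 0.
  by apply/eqP=> h; move: (rmorph_unit iota uu); rewrite h unitr0.
field; rewrite ?pm0 ?iu0 //; by apply/andP.
Qed.

Lemma denom_up d e x : inR iota (iota pi ^+ d * x) -> (d <= e)%N ->
  inR iota (iota pi ^+ e * x).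
Proof.
move=> h hde; rewrite -(subnK hde) exprD -mulrA; apply: inRM => //; exact: inRp.
Qed.

Lemma denom_fin (I : finType) (f : I -> K) :
  exists d, forall i, inR iota (iota pi ^+ d * f i).
Proof.
have /fin_all_exists [D hD] : forall i, exists d, inR iota (iota pi ^+ d * f i).
  by move=> i; exact: denom1.
exists (\sum_i D i)%N => i; apply: (denom_up (hD i)).
by rewrite (bigD1 i) //= leq_addr.
Qed.

End Basics.

Section Flag.
Variables (R : idomainType) (pi : R) (K : fieldType) (iota : {rmorphism R -> K}).
Hypothesis hDVR : DVR_with_uniformizer pi.
Hypothesis hfrac : fraction_field_of iota.
Variable V : vectType K.

Definition submodP (M : V -> Prop) :=
  [/\ M 0, forall x y, M x -> M y -> M (x + y) &
      forall r x, M x -> M (iota r *: x)].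

Lemma submod_sum M (hM : submodP M) (I : Type) (r : seq I) (F : I -> V) :
  (forall i, M (F i)) -> M (\sum_(i <- r) F i).
Proof. case: hM => M0 MD _ h; exact: (big_ind M). Qed.

Lemma submodN M (hM : submodP M) x : M x -> M (- x).
Proof.
case: hM => _ _ MZ Mx; rewrite -scaleN1r -(rmorphN1 iota); exact: MZ.
Qed.

Lemma submodB M (hM : submodP M) x y : M x -> M y -> M (x - y).
Proof. move=> Mx My; case: (hM) => _ MD _; apply: MD => //; exact: submodN. Qed.

Lemma flag n (b : n.-tuple V) (hb : basis_of fullv b) M (hM : submodP M) e a
 (H1 : forall x, M x -> forall i, inR iota (iota pi ^+ e * coord b i x))
 (H2 : forall i : 'I_n, M (iota pi ^+ a *: b`_i)) :
 exists m : n.-tuple V, basis_of fullv m /\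
   forall x, M x <-> exists c : 'I_n -> R, x = \sum_i iota (c i) *: m`_i.
Proof.
set p := iota pi.
have hp : p != 0 by exact: p_neq0.
have pe0 : forall k, p ^+ k != 0 by move=> k; rewrite expf_neq0.
have free_b := basis_free hb.
case: (hM) => M0 MD MZ.
have ex : forall k : 'I_n, exists mf : V * nat,
   [/\ M mf.1, (forall j : 'I_n, (k < j)%N -> coord b j mf.1 = 0),
       p ^+ e * coord b k mf.1 = p ^+ mf.2 &
       forall g, (exists m, [/\ M m, (forall j : 'I_n, (k < j)%N -> coord b j m = 0)
                  & p ^+ e * coord b k m = p ^+ g]) -> (mf.2 <= g)%N].
  move=> k.
  have [|g [[m [Mm hz hk]] hmin]] := least_nat (P := fun g => exists m, [/\ M m,
     (forall j : 'I_n, (k < j)%N -> coord b j m = 0) & p ^+ e * coord b k m = p ^+ g]).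
    exists (a + e)%N, (p ^+ a *: b`_k); split.
    - exact: H2.
    - move=> j hj; have kj : (k == j) = false by apply/negbTE; rewrite -val_eqE /= neq_ltn hj.
      by rewrite linearZ /= coord_free // kj mulr0.
    - by rewrite linearZ /= coord_free // eqxx mulr1 exprD mulrC.
  by exists (m, g); split.
have /fin_all_exists [mf hmf] := ex.
pose mm k := (mf k).1.
have claim : forall k, (k <= n)%N -> forall x, M x ->
    (forall j : 'I_n, (k <= j)%N -> coord b j x = 0) ->
    exists c : 'I_n -> R, x = \sum_i iota (c i) *: mm i.
  elim=> [|k IH] hk x Mx hx.
    exists (fun _ => 0).
    have -> : x = 0.
      by rewrite (coord_basis hb (memvf x)) big1 // => i _; rewrite hx // scale0r.
    by rewrite big1 // => i _; rewrite rmorph0 scale0r.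
  pose kk : 'I_n := Ordinal hk.
  have [r hr] := H1 _ Mx kk.
  case: (eqVneq r 0) => [r0|rn0].
    apply: (IH (ltnW hk) x Mx) => j.
    rewrite leq_eqVlt => /orP [/eqP jk | kj]; last exact: hx.
    have -> : j = kk by apply: val_inj.
    move: hr; rewrite r0 rmorph0 => /eqP; rewrite mulf_eq0 (negPf (pe0 e)) /=.
    by move/eqP.
  case: hDVR => _ _ /(_ r rn0) [u [g [uu ru]]].
  have iu0 : iota u != 0.
    by apply/eqP=> h; move: (rmorph_unit iota uu); rewrite h unitr0.
  have Pg : exists m, [/\ M m, (forall j : 'I_n, (kk < j)%N -> coord b j m = 0)
                  & p ^+ e * coord b kk m = p ^+ g].
    exists (iota (u^-1) *: x); split.
    - exact: MZ.
    - by move=> j hj; rewrite linearZ /= hx ?mulr0.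
    - rewrite linearZ /= mulrCA hr ru rmorphM rmorphXn rmorphV // mulrA mulVf //.
      by rewrite mul1r.
  have [Mm hz hkk hmin] := hmf kk.
  have fg := hmin g Pg.
  pose s := u * pi ^+ (g - (mf kk).2).
  pose y := x - iota s *: mm kk.
  have My : M y by apply: submodB => //; exact: MZ.
  have [c hc] : exists c : 'I_n -> R, y = \sum_i iota (c i) *: mm i.
    apply: (IH (ltnW hk) y My) => j.
    rewrite leq_eqVlt => /orP [/eqP jk | kj].
      have -> : j = kk by apply: val_inj.
      suff h : p ^+ e * coord b kk y = 0.
        by move/eqP: h; rewrite mulf_eq0 (negPf (pe0 e)) => /eqP.
      rewrite /y linearB linearZ /= mulrBr mulrCA hkk hr ru /s.
      rewrite !rmorphM !rmorphXn -mulrA -exprD subnK //.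
      by rewrite subrr.
    by rewrite /y linearB linearZ /= hx // hz // mulr0 subr0.
  exists (fun i => c i + (if i == kk then s else 0)).
  have -> : x = y + iota s *: mm kk by rewrite /y subrK.
  rewrite hc.
  rewrite [RHS](eq_bigr (fun i => iota (c i) *: mm i +
     iota (if i == kk then s else 0) *: mm i)); last first.
    by move=> i _; rewrite rmorphD scalerDl.
  rewrite big_split /=; congr (_ + _).
  rewrite (bigD1 kk) //= eqxx big1 ?addr0 // => i /negPf ->.
  by rewrite rmorph0 scale0r.
pose T := [tuple mm i | i < n].
have Tn : forall i : 'I_n, T`_i = mm i by move=> i; rewrite nth_mktuple.
have hall : forall x, M x -> exists c : 'I_n -> R, x = \sum_i iota (c i) *: mm i.
  move=> x Mx; apply: (claim n (leqnn n) x Mx) => j hj.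
  by move: (ltn_ord j); rewrite ltnNge hj.
exists T; split.
  rewrite basisEdim size_tuple (size_basis hb) leqnn andbT.
  rewrite -(span_basis hb); apply/span_subvP => v /(nthP 0) [i ilt <-].
  rewrite size_tuple in ilt.
  have -> : b`_i = p ^- a *: (p ^+ a *: b`_(Ordinal ilt)).
    by rewrite scalerA mulVf // scale1r.
  have [c ->] := hall _ (H2 (Ordinal ilt)).
  apply: memvZ; apply: memv_suml => j _; apply: memvZ; rewrite -Tn.
  by apply: memv_span; apply: mem_nth; rewrite size_tuple.
move=> x; split.
  move=> Mx; have [c hc] := hall x Mx; exists c.
  by under eq_bigr do rewrite Tn.
case=> c ->; apply: submod_sum => // i; rewrite Tn; apply: MZ.
by case: (hmf i).
Qed.

End Flag.

Section Forms.
Variables (R : idomainType) (pi : R) (K : fieldType) (iota : {rmorphism R -> K}).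
Hypothesis hDVR : DVR_with_uniformizer pi.
Hypothesis hfrac : fraction_field_of iota.
Variables (V : vectType K) (B : V -> V -> K).
Hypothesis B1 : forall (c : K) (x y z : V), B (c *: x + y) z = c * B x z + B y z.
Hypothesis B2 : forall (c : K) (x y z : V), B x (c *: y + z) = c * B x y + B x z.
Hypothesis nondeg : forall x : V, (forall y : V, B x y = 0) -> x = 0.

Lemma B0l z : B 0 z = 0.
Proof.
have := B1 1 0 0 z; rewrite scale1r addr0 mul1r => h.
by apply: (addrI (B 0 z)); rewrite addr0 -h.
Qed.
Lemma B0r z : B z 0 = 0.
Proof.
have := B2 1 z 0 0; rewrite scale1r addr0 mul1r => h.
by apply: (addrI (B z 0)); rewrite addr0 -h.
Qed.
Lemma BZl c x z : B (c *: x) z = c * B x z.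
Proof. by have := B1 c x 0 z; rewrite addr0 B0l addr0. Qed.
Lemma BZr c x z : B z (c *: x) = c * B z x.
Proof. by have := B2 c z x 0; rewrite addr0 B0r addr0. Qed.
Lemma BDl x y z : B (x + y) z = B x z + B y z.
Proof. by have := B1 1 x y z; rewrite scale1r mul1r. Qed.
Lemma BDr x y z : B z (x + y) = B z x + B z y.
Proof. by have := B2 1 z x y; rewrite scale1r mul1r. Qed.
Lemma Bsuml (I : Type) (r : seq I) (F : I -> V) z :
  B (\sum_(i <- r) F i) z = \sum_(i <- r) B (F i) z.
Proof. exact: (big_morph (fun x => B x z) (fun x y => BDl x y z) (B0l z)). Qed.
Lemma Bsumr (I : Type) (r : seq I) (F : I -> V) z :
  B z (\sum_(i <- r) F i) = \sum_(i <- r) B z (F i).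
Proof. exact: (big_morph (fun x => B z x) (fun x y => BDr x y z) (B0r z)). Qed.

Lemma bound n (b : n.-tuple V) (hb : basis_of fullv b) : exists d, forall x,
  (forall j : 'I_n, inR iota (B x b`_j)) ->
  forall i : 'I_n, inR iota (iota pi ^+ d * coord b i x).
Proof.
pose G : 'M[K]_n := \matrix_(i, j) B b`_i b`_j.
pose cx x : 'rV[K]_n := \row_i coord b i x.
have key x (j : 'I_n) : B x b`_j = (cx x *m G) 0 j.
  rewrite {1}(coord_basis hb (memvf x)) Bsuml !mxE; apply: eq_bigr => i _.
  by rewrite BZl !mxE.
have Gu : G \in unitmx.
  rewrite -row_free_unit -kermx_eq0; apply/eqP/row_matrixP => i; rewrite row0.
  set u := row i (kermx G).
  have uG : u *m G = 0 by apply/sub_kermxP; exact: row_sub.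
  pose x := \sum_l u 0 l *: b`_l.
  have cxu : cx x = u.
    by apply/rowP => l; rewrite mxE coord_sum_free // (basis_free hb).
  have x0 : x = 0.
    apply: nondeg => y; rewrite (coord_basis hb (memvf y)) Bsumr big1 // => j _.
    by rewrite BZr key cxu uG mxE mulr0.
  by apply/rowP => l; rewrite -cxu x0 !mxE linear0.
have [d hd] := denom_fin hDVR hfrac (fun ji : 'I_n * 'I_n => invmx G ji.1 ji.2).
exists d => x hx i.
have -> : coord b i x = \sum_(j < n) B x b`_j * invmx G j i.
  have := mulmxK Gu (cx x) => /(congr1 (fun M : 'rV_n => M 0 i)).
  rewrite [in RHS]mxE => <-; rewrite mxE; apply: eq_bigr => j _.
  by rewrite key.
rewrite mulr_sumr; apply: inR_sum => j; rewrite mulrCA; apply: inRM => //.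
exact: (hd (j, i)).
Qed.

End Forms.

Section Main.
Variables (R : idomainType) (pi : R) (K : fieldType) (iota : {rmorphism R -> K}).
Variables (A : algType R) (star : A -> A) (V : vectType K) (act : A -> V -> V)
  (B : V -> V -> K).
Hypothesis hact2 : forall (r : R) (a : A) (x y : V),
      act a (iota r *: x + y) = iota r *: act a x + act a y.
Hypothesis B1 : forall (c : K) (x y z : V), B (c *: x + y) z = c * B x z + B y z.
Hypothesis B2 : forall (c : K) (x y z : V), B x (c *: y + z) = c * B x y + B x z.
Hypothesis compat : forall (a : A) (x y : V), B (act a x) y = B x (act (star a) y).
Hypothesis symR : forall x y, inR iota (B x y) -> inR iota (B y x).

Lemma act0 a : act a 0 = 0.
Proof.
have := hact2 1 a 0 0; rewrite scaler0 addr0 rmorph1 scale1r => h.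
by apply: (addrI (act a 0)); rewrite addr0 -h.
Qed.
Lemma actZ r a x : act a (iota r *: x) = iota r *: act a x.
Proof. by have := hact2 r a x 0; rewrite addr0 act0 addr0. Qed.
Lemma actD a x y : act a (x + y) = act a x + act a y.
Proof. by have := hact2 1 a x y; rewrite rmorph1 !scale1r. Qed.

Lemma dual_submod M : submodP iota (dual_lattice iota B M).
Proof.
split.
- by move=> y _; rewrite (B0l B1); exact: inR0.
- move=> x z hx hz y My; rewrite (BDl B1); apply: inRD; [exact: hx | exact: hz].
- move=> r x hx y My; rewrite (BZl B1); apply: inRM; [exact: inR_iota | exact: hx].
Qed.

Lemma dual_stable M : stable_under act M -> stable_under act (dual_lattice iota B M).
Proof. by move=> hs a x hx y My; rewrite compat; apply: hx; apply: hs. Qed.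

Lemma dual_anti (M N : V -> Prop) : (forall x, M x -> N x) ->
  forall x, dual_lattice iota B N x -> dual_lattice iota B M x.
Proof. by move=> h x hx y My; apply: hx; apply: h. Qed.

Lemma iter (M0 : V -> Prop) : forall n (M : V -> Prop), submodP iota M ->
  stable_under act M -> (forall x, M x -> dual_lattice iota B M x) ->
  (forall x, dual_lattice iota B M x -> M (iota (pi ^+ n) *: x)) ->
  (forall x, M0 x -> M x) ->
  exists N, [/\ submodP iota N, stable_under act N,
     almost_self_dual iota pi B N & forall x, M0 x -> N x].
Proof.
elim=> [|n IH] M hM hs hMd hb h0.
  exists M; split=> //; split=> // x hx.
  have := hb x hx; rewrite expr0 rmorph1 scale1r => Mx.
  by case: hM => _ _ MZ; exact: MZ.
case: n IH hb => [|k] IH hb.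
  by exists M; split=> //; split=> // x hx; rewrite -[pi]expr1; exact: hb.
pose q := iota (pi ^+ k.+1).
pose N := fun x => exists m y, [/\ M m, dual_lattice iota B M y & x = m + q *: y].
have hD := dual_submod M.
have MN : forall x, M x -> N x.
  move=> x Mx; exists x, 0; split=> //; first by case: hD.
  by rewrite scaler0 addr0.
case: (hM) => M0' MD MZ.
apply: (IH N).
- split.
  + exact: MN.
  + move=> x z [m1 [y1 [Mm1 Dy1 ->]]] [m2 [y2 [Mm2 Dy2 ->]]].
    exists (m1 + m2), (y1 + y2); split; [exact: MD | by case: hD => _ hDD _; exact: hDD |].
    by rewrite scalerDr addrACA.
  + move=> r x [m [y [Mm Dy ->]]]; exists (iota r *: m), (iota r *: y); split.
    * exact: MZ.
    * by case: hD => _ _ hDZ; exact: hDZ.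
    * by rewrite scalerDr !scalerA mulrC.
- move=> a x [m [y [Mm Dy ->]]]; exists (act a m), (act a y); split.
  + exact: hs.
  + exact: dual_stable.
  + by rewrite actD actZ.
- move=> x [m1 [y1 [Mm1 Dy1 ->]]] z [m2 [y2 [Mm2 Dy2 ->]]].
  rewrite (BDl B1) (BZl B1) !(BDr B2) !(BZr B2).
  rewrite mulrDr mulrA.
  have -> : q * q * B y1 y2 = iota (pi ^+ k) * (iota (pi ^+ k.+2) * B y1 y2).
    by rewrite /q mulrA -!rmorphM -!exprD addSn !addnS.
  apply: inRD; [apply: inRD | apply: inRD].
  + exact: hMd.
  + by apply: inRM; [exact: inR_iota | apply: symR; exact: Dy2].
  + by apply: inRM; [exact: inR_iota | exact: Dy1].
  + apply: inRM; first exact: inR_iota.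
    rewrite -(BZl B1); apply: symR; apply: Dy2; exact: hb.
- move=> x hx; exists 0, x; split=> //; last by rewrite add0r.
  exact: (dual_anti MN).
- by move=> x /h0; exact: MN.
Qed.

End Main.

Theorem theorem5p2p1
  (R : idomainType) (pi : R) (K : fieldType) (iota : {rmorphism R -> K})
  (A : algType R) (star : A -> A) (V : vectType K) (act : A -> V -> V)
  (B : V -> V -> K) :
  DVR_with_uniformizer pi ->
  fraction_field_of iota ->
  (* a |-> a^* is an R-linear involution of the R-algebra A *)
  (forall (r : R) (a b : A), star (r *: a + b) = r *: star a + star b) ->
  (forall a : A, star (star a) = a) ->
  (forall a b : A, star (a * b) = star b * star a) ->
  (* V is an A-module via an R-bilinear map A x V -> V *)
  (forall (r : R) (a b : A) (x : V),
      act (r *: a + b) x = iota r *: act a x + act b x) ->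
  (forall (r : R) (a : A) (x y : V),
      act a (iota r *: x + y) = iota r *: act a x + act a y) ->
  (forall x : V, act 1 x = x) ->
  (forall (a b : A) (x : V), act (a * b) x = act a (act b x)) ->
  (* V admits an A-stable lattice *)
  (exists L : V -> Prop, is_lattice iota L /\ stable_under act L) ->
  (* B is a nondegenerate K-bilinear form compatible with the involution *)
  (forall (c : K) (x y z : V), B (c *: x + y) z = c * B x z + B y z) ->
  (forall (c : K) (x y z : V), B x (c *: y + z) = c * B x y + B x z) ->
  (forall x : V, (forall y : V, B x y = 0) -> x = 0) ->
  (forall (a : A) (x y : V), B (act a x) y = B x (act (star a) y)) ->
  ((forall x : V, B x x = 0) \/
   ((forall x y : V, B x y = B y x) /\ residue_char_neq2 pi)) ->
  exists M : V -> Prop,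
    [/\ is_lattice iota M, stable_under act M & almost_self_dual iota pi B M].
Proof.
move=> hDVR hfrac _ _ _ _ hact2 _ _ [L [[b [hb HL]] stL]] B1 B2 nondeg compat hsym.
have symR : forall x y, inR iota (B x y) -> inR iota (B y x).
  move=> x y [r hr]; case: hsym => [alt | [sym _]]; last by exists r; rewrite sym.
  exists (- r); rewrite rmorphN -hr.
  have := alt (x + y); rewrite (BDl B1) !(BDr B2) alt alt add0r addr0 => /eqP.
  by rewrite addr_eq0 => /eqP ->; rewrite opprK.
set n := \dim (fullv : {vspace V}) in b hb HL *.
have free_b := basis_free hb.
have Lsum : forall c : 'I_n -> R, L (\sum_i iota (c i) *: b`_i).
  by move=> c; apply/HL; exists c.
have Lb : forall j : 'I_n, L b`_j.
  move=> j; have := Lsum (fun i => (i == j)%:R).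
  rewrite (bigD1 j) //= eqxx rmorph1 scale1r big1 ?addr0 // => i /negPf ->.
  by rewrite rmorph0 scale0r.
have Lcoord : forall x, L x -> forall i, inR iota (coord b i x).
  move=> x /HL [c ->] i; rewrite coord_sum_free //; exact: inR_iota.
have Lsub : submodP iota L.
  split.
  - have := Lsum (fun _ => 0); rewrite big1 // => i _; by rewrite rmorph0 scale0r.
  - move=> x y /HL [c ->] /HL [c' ->]; rewrite -big_split /=.
    have := Lsum (fun i => c i + c' i); congr L; apply: eq_bigr => i _.
    by rewrite rmorphD scalerDl.
  - move=> r x /HL [c ->]; rewrite scaler_sumr.
    have := Lsum (fun i => r * c i); congr L; apply: eq_bigr => i _.
    by rewrite rmorphM -scalerA.
have [c hc] := denom_fin hDVR hfrac
  (fun ij : 'I_n * 'I_n => B b`_(ij.1) b`_(ij.2)).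
pose P := iota (pi ^+ c).
pose M0 := fun x => exists l, L l /\ x = P *: l.
have M0sub : submodP iota M0.
  case: Lsub => L0 LD LZ; split.
  - by exists 0; rewrite scaler0.
  - by move=> x y [l [Ll ->]] [l' [Ll' ->]]; exists (l + l'); rewrite scalerDr; split=> //; exact: LD.
  - move=> r x [l [Ll ->]]; exists (iota r *: l); split; first exact: LZ.
    by rewrite !scalerA mulrC.
have M0st : stable_under act M0.
  move=> a x [l [Ll ->]]; exists (act a l); split; first exact: stL.
  by rewrite /P actZ.
have M0d : forall x, M0 x -> dual_lattice iota B M0 x.
  move=> x [l [Ll ->]] y [l' [Ll' ->]].
  rewrite (BZl B1) (BZr B2); apply: inRM; first exact: inR_iota.
  move: Ll Ll' => /HL [r ->] /HL [s ->].
  rewrite (Bsuml B1) mulr_sumr; apply: inR_sum => i.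
  rewrite (BZl B1) (Bsumr B2) mulrCA mulr_sumr; apply: inRM; first exact: inR_iota.
  apply: inR_sum => j.
  rewrite (BZr B2) mulrCA; apply: inRM; first exact: inR_iota.
  by rewrite /P rmorphXn; exact: (hc (i, j)).
have [d hd] := bound hDVR hfrac B1 B2 nondeg hb.
have M0bound : forall y, dual_lattice iota B M0 y ->
    forall i, inR iota (iota pi ^+ (d + c) * coord b i y).
  move=> y hy i.
  have hj : forall j : 'I_n, inR iota (B (P *: y) b`_j).
    move=> j; rewrite (BZl B1) -(BZr B2); apply: hy; exists b`_j; split=> //.
  have := hd _ hj i.
  by rewrite linearZ /= /P rmorphXn mulrA -exprD.
have M0L : forall y, dual_lattice iota B M0 y -> L (iota (pi ^+ (d + c)) *: y).
  move=> y hy.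
  have /fin_all_exists [r hr] : forall i, exists r, iota (pi ^+ (d + c)) * coord b i y = iota r.
    by move=> i; have [r hr] := M0bound y hy i; exists r; rewrite rmorphXn.
  rewrite (coord_basis hb (memvf (iota (pi ^+ (d + c)) *: y))).
  have := Lsum r; congr L; apply: eq_bigr => i _.
  by rewrite linearZ /= hr.
have hb0 : forall y, dual_lattice iota B M0 y -> M0 (iota (pi ^+ (c + (d + c))) *: y).
  move=> y hy; exists (iota (pi ^+ (d + c)) *: y); split; first exact: M0L.
  by rewrite /P scalerA -rmorphM -exprD.
have [N [Nsub Nst Nasd N0]] := iter hact2 B1 B2 compat symR
  (M0 := M0) M0sub M0st M0d hb0 (fun x hx => hx).
exists N; split=> //.
have H1 : forall x, N x -> forall i, inR iota (iota pi ^+ (d + c) * coord b i x).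
  move=> x Nx; apply: M0bound; apply: (dual_anti N0); case: Nasd => _; exact.
have H2 : forall i : 'I_n, N (iota pi ^+ c *: b`_i).
  by move=> i; apply: N0; exists b`_i; split=> //; rewrite /P rmorphXn.
have [m [hm Hm]] := flag hDVR hfrac hb Nsub H1 H2.
by exists m.
Qed.
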